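(* Let $0\le b\le1$ and $0\le\alpha<1$, and let $r_0=r_0(\alpha)$ be the real root in $(0,1)$ of the equation \[2\big(1-\alpha+2(2-\alpha)(1-b)r\big)(1-r)^4=1-\alpha+4r+(1+\alpha)r^2.\] Let $\mathcal{F}$ be the class of functions $f\in\mathcal{A}_b$, $f(z)=z+\sum_{n\ge2}a_nz^n$, with $|a_n|\le n$ for all $n\ge3$. Then: (i) every $f\in\mathcal{F}$ satisfies $\left|\frac{zf''(z)}{f'(z)}\right|\le1-\alpha$ for $|z|\le r_0$; (ii) $r_0(\alpha)$ is the radius of convexity of order $\alpha$ of $\mathcal{F}$; (iii) $r_0(1/2)$ is the radius of uniform convexity of $\mathcal{F}$. All results are sharp: the function $f_0(z)=2z+2(1-b)z^2-\frac{z}{(1-z)^2}=z-2bz^2-\sum_{n\ge3}nz^n$ belongs to $\mathcal{F}$ and satisfies $\left|\frac{zf_0''(z)}{f_0'(z)}\right|=1-\alpha$ and $\operatorname{Re}\frac{zf_0''(z)}{f_0'(z)}=\alpha-1$ at $z=r_0$.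
   Context: $\mathbb{D}=\{z\in\mathbb{C}:|z|<1\}$. For $0\le b\le1$, $\mathcal{A}_b$ is the class of analytic functions $f$ on $\mathbb{D}$ of the form $f(z)=z+a_2z^2+a_3z^3+\cdots$ with $|a_2|=2b$. For a class $\mathcal{F}$ of analytic functions on $\mathbb{D}$ normalized by $f(0)=0$, $f'(0)=1$, and $0\le\alpha<1$, the radius of convexity of order $\alpha$ of $\mathcal{F}$ is the supremum of $r\in(0,1]$ such that every $f\in\mathcal{F}$ satisfies $f'(z)\ne0$ and $\operatorname{Re}\big(1+zf''(z)/f'(z)\big)>\alpha$ for $|z|<r$. The radius of uniform convexity of $\mathcal{F}$ is the supremum of $r\in(0,1]$ such that every $f\in\mathcal{F}$ satisfies $f'(z)\ne0$ and $\operatorname{Re}\big(1+zf''(z)/f'(z)\big)>\left|zf''(z)/f'(z)\right|$ for $|z|<r$. *)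

(* Defs.v *)
From Stdlib Require Import Reals.
From Coquelicot Require Import Coquelicot.
Open Scope R_scope.

Definition Cderiv (g : C -> C) (z l : C) : Prop :=
  @is_derive C_AbsRing C_NormedModule g z l.

Definition Csum (u : nat -> C) (l : C) : Prop :=
  @is_series C_AbsRing C_NormedModule u l.

Definition InFclass (b : R) (f f1 f2 : C -> C) : Prop :=
  exists a : nat -> C,
    a 0%nat = 0%C /\ a 1%nat = 1%C /\ Cmod (a 2%nat) = 2 * b /\
    (forall n : nat, (3 <= n)%nat -> Cmod (a n) <= INR n) /\
    (forall z : C, Cmod z < 1 ->
       Csum (fun n => (a n * z ^ n)%C) (f z) /\
       Cderiv f z (f1 z) /\ Cderiv f1 z (f2 z)).

Definition convex_order_radii (alpha : R) (P : (C -> C) -> (C -> C) -> (C -> C) -> Prop)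
  (r : R) : Prop :=
  0 < r <= 1 /\
  forall f f1 f2, P f f1 f2 -> forall z : C, Cmod z < r ->
    f1 z <> 0%C /\ Re (1 + z * f2 z / f1 z)%C > alpha.

Definition is_radius_convexity_order (alpha : R) P (rho : R) : Prop :=
  is_lub (convex_order_radii alpha P) rho.

Definition unif_convex_radii (P : (C -> C) -> (C -> C) -> (C -> C) -> Prop) (r : R) : Prop :=
  0 < r <= 1 /\
  forall f f1 f2, P f f1 f2 -> forall z : C, Cmod z < r ->
    f1 z <> 0%C /\ Re (1 + z * f2 z / f1 z)%C > Cmod (z * f2 z / f1 z)%C.

Definition is_radius_unif_convexity P (rho : R) : Prop :=
  is_lub (unif_convex_radii P) rho.

Definition r0_eq (b alpha r : R) : Prop :=
  2 * (1 - alpha + 2 * (2 - alpha) * (1 - b) * r) * (1 - r) ^ 4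
  = 1 - alpha + 4 * r + (1 + alpha) * r ^ 2.

Definition f0 (b : R) (z : C) : C :=
  (2 * z + 2 * RtoC (1 - b) * z ^ 2 - z / (1 - z) ^ 2)%C.

(* Main.v *)
Require Import Defs.
From Stdlib Require Import Reals Lra Lia Psatz ClassicalEpsilon.
From Coquelicot Require Import Coquelicot.
Open Scope R_scope.

Lemma lim_dom {K1 K2 : AbsRing} {V1 : NormedModule K1} {V2 : NormedModule K2}
  (f : nat -> V1) (g : nat -> V2) (l : V1) (L : V2) :
  (forall N, norm (minus (g N) L) <= norm (minus (f N) l)) ->
  filterlim f eventually (locally l) -> filterlim g eventually (locally L).
Proof.
  intros H Hf. apply filterlim_locally_ball_norm. intros eps.
  pose proof (proj1 (filterlim_locally_ball_norm f l) Hf eps) as Hf'.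
  revert Hf'; apply filter_imp. intros N HN. unfold ball_norm in *.
  eapply Rle_lt_trans; [apply H| exact HN].
Qed.

Lemma norm_R (x : R) : norm x = Rabs x.
Proof. reflexivity. Qed.
Lemma minus_R (x y : R) : minus x y = x - y.
Proof. reflexivity. Qed.
Lemma norm_C (x : C) : norm x = Cmod x.
Proof. reflexivity. Qed.
Lemma minus_C (x y : C) : minus x y = (x - y)%C.
Proof. reflexivity. Qed.
Lemma plus_C (x y : C) : plus x y = (x + y)%C.
Proof. reflexivity. Qed.
Lemma plus_R (x y : R) : plus x y = x + y.
Proof. reflexivity. Qed.
Lemma scal_C (x y : C) : scal x y = (x * y)%C.
Proof. reflexivity. Qed.
Lemma opp_C (x : C) : opp x = (- x)%C.
Proof. reflexivity. Qed.

Lemma lim_zero_bound {K2 : AbsRing} {V2 : NormedModule K2}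
  (g : nat -> V2) (L : V2) (e : nat -> R) :
  (forall N, norm (minus (g N) L) <= e N) -> is_lim_seq e 0 ->
  filterlim g eventually (locally L).
Proof.
  intros H He. apply (lim_dom e g 0 L); [|exact He].
  intros N. rewrite norm_R, minus_R, Rminus_0_r. eapply Rle_trans;[apply H|apply Rle_abs].
Qed.

Lemma series_unique_C (u : nat -> C) (l1 l2 : C) : is_series u l1 -> is_series u l2 -> l1 = l2.
Proof. intros H1 H2. exact (filterlim_locally_unique _ _ _ H1 H2). Qed.

Definition CS (u : nat -> C) : C := epsilon (inhabits (RtoC 0)) (fun l : C => @is_series C_AbsRing C_NormedModule u l).
Lemma CS_correct u : ex_series u -> is_series u (CS u).
Proof. intros [l Hl]. unfold CS. apply epsilon_spec. exists l; exact Hl. Qed.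
Lemma CS_eq u (l : C) : is_series u l -> CS u = l.
Proof. intros H. apply (series_unique_C u); [apply CS_correct; exists l|]; exact H. Qed.

Lemma series_le_R (u v : nat -> R) a b : (forall n, u n <= v n) ->
  is_series u a -> is_series v b -> a <= b.
Proof.
  intros H Ha Hb.
  assert (HH: Rbar_le a b).
  { apply (is_lim_seq_le (sum_n u) (sum_n v)); [|exact Ha|exact Hb].
    intros N. unfold sum_n. apply sum_n_m_le. exact H. }
  exact HH.
Qed.

Lemma series_norm_le (u : nat -> C) (v : nat -> R) (l : C) (L : R) :
  (forall n, Cmod (u n) <= v n) -> is_series u l -> is_series v L -> Cmod l <= L.
Proof.
  intros H Hl HL.
  assert (HH: Rbar_le (Cmod l) L).
  { apply (is_lim_seq_le (fun N => Cmod (sum_n u N)) (sum_n v)); [| |exact HL].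
    - intros N. unfold sum_n. eapply Rle_trans. apply (norm_sum_n_m u 0 N).
      apply sum_n_m_le. intros k. apply H.
    - unfold is_lim_seq. simpl. eapply filterlim_comp. exact Hl. apply (filterlim_norm l). }
  exact HH.
Qed.

Fixpoint gseq (k : nat) : nat -> R :=
  match k with O => fun _ => 1 | S k => PS_derive (gseq k) end.

Lemma CV_ones : CV_radius (fun _ => 1) = 1.
Proof.
  rewrite (CV_radius_finite_DAlembert _ 1).
  - simpl. now rewrite Rinv_1.
  - intros; lra.
  - lra.
  - apply is_lim_seq_ext with (fun _ => 1). intros; unfold Rdiv; rewrite Rinv_1, Rmult_1_l, Rabs_R1; reflexivity.
    apply is_lim_seq_const.
Qed.

Lemma CV_gseq k : CV_radius (gseq k) = 1.
Proof. induction k; simpl. apply CV_ones. rewrite CV_radius_derive. exact IHk. Qed.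

Lemma gseq_ge k : forall n, (INR n + 1)^k <= gseq k n.
Proof.
  induction k; intros n; simpl. lra.
  unfold PS_derive. rewrite S_INR.
  apply Rmult_le_compat_l. pose proof (pos_INR n); lra.
  eapply Rle_trans; [|apply IHk]. apply pow_incr. split. pose proof (pos_INR n); lra.
  rewrite S_INR; lra.
Qed.

Lemma pow_series k s : 0 <= s < 1 -> ex_series (fun n => (INR n + 1)^k * s^n).
Proof.
  intros Hs.
  apply (ex_series_le (V := R_CompleteNormedModule)) with (b := fun n => Rabs (gseq k n * s^n)).
  - intros n. rewrite norm_R. rewrite !Rabs_mult. apply Rmult_le_compat_r. apply Rabs_pos.
    rewrite (Rabs_pos_eq ((INR n + 1)^k)). eapply Rle_trans. apply gseq_ge. apply Rle_abs.
    apply pow_le. pose proof (pos_INR n); lra.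
  - apply CV_disk_inside. rewrite CV_gseq. simpl. rewrite Rabs_pos_eq; lra.
Qed.
Definition dC (c : nat -> C) (n : nat) : C := (RtoC (INR (S n)) * c (S n))%C.

Lemma Cmod_minus_le (a b : C) : Cmod (a - b) <= Cmod a + Cmod b.
Proof. unfold Cminus. eapply Rle_trans. apply Cmod_triangle. rewrite Cmod_opp. lra. Qed.

Lemma Cmod_pow_le (z : C) rho n : Cmod z <= rho -> Cmod (z ^ n) <= rho ^ n.
Proof. intros H. rewrite Cmod_pow. apply pow_incr. split. apply Cmod_ge_0. exact H. Qed.

Lemma e_bound (w z : C) rho : 0 < rho -> Cmod w <= rho -> Cmod z <= rho ->
  forall n, rho * Cmod (w ^ n - z ^ n) <= INR n * rho ^ n * Cmod (w - z).
Proof.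
  intros Hr Hw Hz n. induction n.
  - simpl. replace (1 - 1)%C with (RtoC 0) by ring. rewrite Cmod_0. lra.
  - replace (w ^ S n - z ^ S n)%C with (w * (w ^ n - z ^ n) + z ^ n * (w - z))%C by (simpl; ring).
    pose proof (Cmod_triangle (w * (w ^ n - z ^ n)) (z ^ n * (w - z))) as T.
    rewrite !Cmod_mult in T.
    pose proof (Cmod_pow_le z rho n Hz) as Pz.
    pose proof (Cmod_ge_0 (w ^ n - z ^ n)). pose proof (Cmod_ge_0 (w - z)).
    pose proof (Cmod_ge_0 w). pose proof (Cmod_ge_0 (z ^ n)).
    assert (A1: Cmod w * (rho * Cmod (w ^ n - z ^ n)) <= rho * (INR n * rho ^ n * Cmod (w - z))).
    { apply Rmult_le_compat; try lra. apply Rmult_le_pos; lra. }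
    assert (A2: Cmod (z ^ n) * Cmod (w - z) <= rho ^ n * Cmod (w - z)).
    { apply Rmult_le_compat_r; lra. }
    rewrite S_INR. simpl pow.
    apply Rle_trans with (rho * (Cmod w * Cmod (w ^ n - z ^ n) + Cmod (z ^ n) * Cmod (w - z))).
    apply Rmult_le_compat_l; lra. nra.
Qed.

Lemma d_step (w z : C) n :
  (w ^ S n - z ^ S n - RtoC (INR (S n)) * z ^ (pred (S n)) * (w - z))%C =
  ((w - z) * (w ^ n - z ^ n) + z * (w ^ n - z ^ n - RtoC (INR n) * z ^ (pred n) * (w - z)))%C.
Proof.
  destruct n.
  - simpl. ring.
  - rewrite !S_INR. rewrite !RtoC_plus. simpl pred. simpl Cpow. ring.
Qed.

Lemma d_bound (w z : C) rho : 0 < rho -> Cmod w <= rho -> Cmod z <= rho ->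
  forall n, rho ^ 2 * Cmod (w ^ n - z ^ n - RtoC (INR n) * z ^ (pred n) * (w - z))
            <= INR n ^ 2 * rho ^ n * Cmod (w - z) ^ 2.
Proof.
  intros Hr Hw Hz n. induction n.
  - simpl. replace (1 - 1 - RtoC 0 * 1 * (w - z))%C with (RtoC 0) by ring. rewrite Cmod_0. lra.
  - rewrite d_step.
    pose proof (Cmod_triangle ((w - z) * (w ^ n - z ^ n))
      (z * (w ^ n - z ^ n - RtoC (INR n) * z ^ (pred n) * (w - z)))) as T.
    rewrite !Cmod_mult in T.
    pose proof (e_bound w z rho Hr Hw Hz n) as Eb.
    set (E := Cmod (w ^ n - z ^ n)) in *.
    set (D := Cmod (w ^ n - z ^ n - RtoC (INR n) * z ^ (pred n) * (w - z))) in *.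
    set (H := Cmod (w - z)) in *.
    assert (0 <= E) by apply Cmod_ge_0. assert (0 <= D) by apply Cmod_ge_0.
    assert (0 <= H) by apply Cmod_ge_0. pose proof (Cmod_ge_0 z).
    pose proof (pos_INR n). pose proof (pow_le rho n (Rlt_le _ _ Hr)).
    assert (A1: rho * H * (rho * E) <= rho * H * (INR n * rho ^ n * H)).
    { apply Rmult_le_compat_l. apply Rmult_le_pos; lra. exact Eb. }
    assert (A2: Cmod z * (rho ^ 2 * D) <= rho * (INR n ^ 2 * rho ^ n * H ^ 2)).
    { apply Rmult_le_compat; try lra. apply Rmult_le_pos. apply pow_le; lra. lra. }
    rewrite S_INR.
    apply Rle_trans with (rho ^ 2 * (H * E + Cmod z * D)).
    apply Rmult_le_compat_l. apply pow_le; lra. exact T.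
    replace (rho ^ 2 * (H * E + Cmod z * D)) with (rho * H * (rho * E) + Cmod z * (rho ^ 2 * D)) by ring.
    assert (0 <= INR n * rho ^ n * H * H * rho) by (repeat apply Rmult_le_pos; lra).
    replace ((INR n + 1) ^ 2 * rho ^ S n * H ^ 2) with
      (rho * H * (INR n * rho ^ n * H) + rho * (INR n ^ 2 * rho ^ n * H ^ 2) + (INR n + 1) * (rho ^ n * H * H * rho)) by (simpl; ring).
    assert (0 <= (INR n + 1) * (rho ^ n * H * H * rho)) by (repeat apply Rmult_le_pos; lra).
    lra.
Qed.

Lemma dC_bound (c : nat -> C) K m :
  (forall n, Cmod (c n) <= K * (INR n + 1) ^ m) ->
  forall n, Cmod (dC c n) <= K * 2 ^ m * (INR n + 1) ^ (S m).
Proof.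
  intros Hc n. unfold dC. rewrite Cmod_mult, Cmod_R, Rabs_pos_eq by apply pos_INR.
  pose proof (Hc (S n)) as H. rewrite S_INR in *.
  assert (0 <= K). { pose proof (Hc O) as H0. pose proof (Cmod_ge_0 (c O)). change (INR 0) with 0 in H0.
    rewrite Rplus_0_l, pow1 in H0. lra. }
  pose proof (pos_INR n).
  assert (Hp: (INR n + 1 + 1) ^ m <= 2 ^ m * (INR n + 1) ^ m).
  { rewrite <- Rpow_mult_distr. apply pow_incr. lra. }
  simpl pow. 
  apply Rle_trans with ((INR n + 1) * (K * (INR n + 1 + 1) ^ m)).
  apply Rmult_le_compat_l; lra.
  assert (0 <= K * (2 ^ m * (INR n + 1) ^ m - (INR n + 1 + 1) ^ m)) by (apply Rmult_le_pos; lra).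
  nra.
Qed.

Lemma pls (a b c d e : C) : ((a + - b) + - (c * d) = e)%C ->
  plus (plus a (opp b)) (opp (scal c d)) = e.
Proof. intro H; exact H. Qed.

Lemma decr1_zero (a : nat -> C) (l : C) :
  a 0%nat = RtoC 0 -> is_series (fun k => a (S k)) l -> is_series a l.
Proof. intros H0 H. apply is_series_decr_1. rewrite H0. rewrite plus_C, opp_C.
  replace (l + - RtoC 0)%C with l by ring. exact H. Qed.

Lemma termwise (c : nat -> C) (F : C -> C) (K : R) (m : nat) :
  (forall n, Cmod (c n) <= K * (INR n + 1) ^ m) ->
  (forall w, Cmod w < 1 -> is_series (fun n => (c n * w ^ n)%C) (F w)) ->
  forall z, Cmod z < 1 ->
  ex_series (fun n => (dC c n * z ^ n)%C) /\
  is_derive F z (CS (fun n => (dC c n * z ^ n)%C)).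
Proof.
  intros Hc HF z Hz.
  pose proof (Cmod_ge_0 z) as Hz0.
  set (rho := (1 + Cmod z) / 2).
  assert (Hr : Cmod z < rho < 1) by (unfold rho; lra).
  assert (HK : 0 <= K). { pose proof (Hc O) as H0. pose proof (Cmod_ge_0 (c O)). change (INR 0) with 0 in H0.
    rewrite Rplus_0_l, pow1 in H0. lra. }
  assert (Hex : ex_series (fun n => (dC c n * z ^ n)%C)).
  { apply (ex_series_le (V := C_CompleteNormedModule)) with
      (b := fun n => scal (K * 2 ^ m) ((INR n + 1) ^ (S m) * rho ^ n)).
    - intros n. rewrite norm_C. rewrite Cmod_mult.
      change (scal (K * 2 ^ m) ((INR n + 1) ^ S m * rho ^ n)) with
        ((K * 2 ^ m) * ((INR n + 1) ^ S m * rho ^ n)).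
      rewrite <- Rmult_assoc. apply Rmult_le_compat.
      apply Cmod_ge_0. apply Cmod_ge_0. apply dC_bound; exact Hc.
      apply Cmod_pow_le; lra.
    - apply (@ex_series_scal_l R_AbsRing R_NormedModule). apply pow_series; lra. }
  split; [exact Hex|].
  set (G := CS (fun n => (dC c n * z ^ n)%C)).
  assert (HG : is_series (fun n => (dC c n * z ^ n)%C) G) by (apply CS_correct; exact Hex).
  assert (HG' : is_series (fun n => (RtoC (INR n) * c n * z ^ (pred n))%C) G).
  { apply decr1_zero. simpl. rewrite Cmult_0_l. rewrite Cmult_0_l. reflexivity.
    eapply is_series_ext; [|exact HG]. intros k. unfold dC. simpl pred. reflexivity. }
  destruct (pow_series (m + 2) rho) as [S HS]. lra.
  assert (HS0 : 0 <= S).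
  { assert (HS1 : scal 0 S <= S).
    { apply (series_le_R (fun n => scal 0 ((INR n + 1) ^ (m + 2) * rho ^ n))
             (fun n => (INR n + 1) ^ (m + 2) * rho ^ n) (scal 0 S) S).
    - intros n. change (scal 0 ?x) with (0 * x). rewrite Rmult_0_l.
      apply Rmult_le_pos. apply pow_le. pose proof (pos_INR n); lra. apply pow_le; lra.
    - apply (@is_series_scal_l R_AbsRing R_NormedModule); exact HS.
    - exact HS. }
    change (scal 0 S) with (0 * S) in HS1. rewrite Rmult_0_l in HS1. exact HS1. }
  set (M := K / rho ^ 2 * S).
  assert (HM : 0 <= M).
  { unfold M. apply Rmult_le_pos; [|exact HS0]. unfold Rdiv. apply Rmult_le_pos. exact HK.
    apply Rlt_le, Rinv_0_lt_compat, pow_lt; lra. }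
  assert (Herr : forall w, Cmod (w - z) < rho - Cmod z ->
            Cmod (F w - F z - (w - z) * G)%C <= M * Cmod (w - z) ^ 2).
  { intros w Hw.
    assert (Hw1 : Cmod w <= rho).
    { assert (E: w = ((w - z) + z)%C) by ring. rewrite E at 1.
      eapply Rle_trans. apply Cmod_triangle. lra. }
    assert (Hs : is_series (fun n => (c n * (w ^ n - z ^ n - RtoC (INR n) * z ^ (pred n) * (w - z)))%C)
                  (F w - F z - (w - z) * G)%C).
    { pose proof (is_series_minus _ _ _ _ (HF w ltac:(lra)) (HF z ltac:(lra))) as H1.
      pose proof (is_series_minus _ _ _ _ H1 (is_series_scal_l (w - z)%C _ _ HG')) as H2.
      eapply is_series_ext; [|exact H2]. intros n. simpl. apply pls. ring. }
    eapply Rle_trans. apply (series_norm_le (fun n => (c n * (w ^ n - z ^ n - RtoC (INR n) * z ^ (pred n) * (w - z)))%C) (fun n => scal (K / rho ^ 2 * Cmod (w - z) ^ 2) ((INR n + 1) ^ (m + 2) * rho ^ n))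
             (F w - F z - (w - z) * G)%C (scal (K / rho ^ 2 * Cmod (w - z) ^ 2) S)).
    - intros n. change (scal ?a ?b) with (a * b). rewrite Cmod_mult.
      pose proof (d_bound w z rho ltac:(lra) Hw1 ltac:(lra) n) as Db.
      set (D := Cmod (w ^ n - z ^ n - RtoC (INR n) * z ^ pred n * (w - z))) in *.
      set (H := Cmod (w - z)) in *.
      pose proof (Hc n). pose proof (pos_INR n).
      assert (0 <= D) by apply Cmod_ge_0.
      assert (Hrho : 0 < rho ^ 2) by (apply pow_lt; lra).
      assert (HD : D <= INR n ^ 2 * rho ^ n * H ^ 2 / rho ^ 2).
      { apply Rmult_le_reg_l with (rho ^ 2). exact Hrho. field_simplify; lra. }
      assert (Hn2 : INR n ^ 2 <= (INR n + 1) ^ 2) by nra.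
      rewrite pow_add.
      apply Rle_trans with (K * (INR n + 1) ^ m * (INR n ^ 2 * rho ^ n * H ^ 2 / rho ^ 2)).
      apply Rmult_le_compat; try lra. apply Cmod_ge_0.
      assert (0 <= K * (INR n + 1) ^ m * (rho ^ n * H ^ 2 / rho ^ 2)).
      { apply Rmult_le_pos. apply Rmult_le_pos. lra. apply pow_le; lra.
        unfold Rdiv. apply Rmult_le_pos. apply Rmult_le_pos. apply pow_le; lra. apply pow2_ge_0.
        apply Rlt_le, Rinv_0_lt_compat; lra. }
      replace (K / rho ^ 2 * H ^ 2 * ((INR n + 1) ^ m * (INR n + 1) ^ 2 * rho ^ n)) with
        ((INR n + 1) ^ 2 * (K * (INR n + 1) ^ m * (rho ^ n * H ^ 2 / rho ^ 2))) by (field; lra).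
      replace (K * (INR n + 1) ^ m * (INR n ^ 2 * rho ^ n * H ^ 2 / rho ^ 2)) with
        (INR n ^ 2 * (K * (INR n + 1) ^ m * (rho ^ n * H ^ 2 / rho ^ 2))) by (field; lra).
      apply Rmult_le_compat_r; lra.
    - exact Hs.
    - apply (@is_series_scal_l R_AbsRing R_NormedModule). exact HS.
    - change (scal (K / rho ^ 2 * Cmod (w - z) ^ 2) S) with (K / rho ^ 2 * Cmod (w - z) ^ 2 * S).
      unfold M. lra. }
  unfold is_derive, filterdiff. split. apply is_linear_scal_l.
  intros x Hx. assert (Hxz : z = x) by (apply (@is_filter_lim_locally_unique C_AbsRing (AbsRing_NormedModule C_AbsRing)); exact Hx). subst x.
  intros eps.
  assert (Hd : 0 < Rmin (rho - Cmod z) (eps / (M + 1))).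
  { apply Rmin_pos. lra. apply Rdiv_lt_0_compat. apply cond_pos. lra. }
  exists (mkposreal _ Hd). intros y Hy.
  change (Cmod (y - z) < Rmin (rho - Cmod z) (eps / (M + 1))) in Hy.
  change (Cmod (F y - F z - (y - z) * G) <= eps * Cmod (y - z)).
  
  pose proof (Rmin_l (rho - Cmod z) (eps / (M + 1))).
  pose proof (Rmin_r (rho - Cmod z) (eps / (M + 1))).
  pose proof (Herr y ltac:(lra)) as E.
  replace ((F y - F z - (y - z) * G))%C with ((F y - F z) - (y - z) * G)%C in E by reflexivity.
  eapply Rle_trans. exact E.
  pose proof (Cmod_ge_0 (y - z)). pose proof (cond_pos eps).
  assert (M * Cmod (y - z) <= eps).
  { apply Rle_trans with (M * (eps / (M + 1))). apply Rmult_le_compat_l; lra.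
    apply Rmult_le_reg_r with (M + 1). lra. field_simplify; try lra. }
  simpl pow. nra.
Qed.

Lemma locally_disk (x : R) (P : R -> Prop) : Rabs x < 1 ->
  (forall y, Rabs y < 1 -> P y) -> locally x P.
Proof.
  intros Hx HP. assert (H : 0 < 1 - Rabs x) by lra.
  exists (mkposreal _ H). intros y Hy.
  change (Rabs (y - x) < 1 - Rabs x) in Hy. apply HP.
  replace y with ((y - x) + x) by ring. eapply Rle_lt_trans. apply Rabs_triang. lra.
Qed.

Lemma ps_step (a : nat -> R) (F G : R -> R) : CV_radius a = 1 ->
  (forall y, Rabs y < 1 -> PSeries a y = F y) ->
  (forall y, Rabs y < 1 -> is_derive F y (G y)) ->
  forall x, Rabs x < 1 -> PSeries (PS_derive a) x = G x.
Proof.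
  intros Hr HF HG x Hx.
  rewrite <- Derive_PSeries by (rewrite Hr; simpl; lra).
  rewrite (Derive_ext_loc _ F). apply is_derive_unique; auto.
  apply locally_disk; auto.
Qed.

Definition p1 : nat -> R := PS_derive (fun _ => 1).
Definition q0 : nat -> R := PS_incr_1 p1.
Definition q1 : nat -> R := PS_derive q0.
Definition q2 : nat -> R := PS_derive q1.

Lemma CV_q2 : CV_radius q2 = 1 /\ CV_radius q1 = 1 /\ CV_radius q0 = 1 /\ CV_radius p1 = 1.
Proof.
  unfold q2, q1, q0, p1. rewrite !CV_radius_derive, CV_radius_incr_1, CV_radius_derive, CV_ones.
  auto.
Qed.

Lemma PS_ones x : Rabs x < 1 -> PSeries (fun _ => 1) x = / (1 - x).
Proof.
  intros Hx. apply is_series_unique. apply is_series_ext with (fun n => x ^ n).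
  intros n. change (x ^ n = 1 * x ^ n). ring. apply is_series_geom; exact Hx.
Qed.

Lemma PS_p1 x : Rabs x < 1 -> PSeries p1 x = / (1 - x) ^ 2.
Proof.
  intros Hx. unfold p1. apply (ps_step _ (fun y => / (1 - y)) (fun y => / (1 - y) ^ 2)).
  apply CV_ones. apply PS_ones.
  intros y Hy. assert (1 - y <> 0) by (apply Rabs_def2 in Hy; lra).
  apply Rabs_def2 in Hy.
  auto_derive. repeat apply Rmult_integral_contrapositive_currified; intro; lra.
  field. lra. exact Hx.
Qed.

Lemma PS_q0 x : Rabs x < 1 -> PSeries q0 x = x / (1 - x) ^ 2.
Proof. intros Hx. unfold q0. rewrite PSeries_incr_1, PS_p1 by auto. unfold Rdiv. reflexivity. Qed.

Lemma PS_q1 x : Rabs x < 1 -> PSeries q1 x = (1 + x) / (1 - x) ^ 3.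
Proof.
  intros Hx. unfold q1. apply (ps_step _ (fun y => y / (1 - y) ^ 2) (fun y => (1 + y) / (1 - y) ^ 3)).
  apply CV_q2. apply PS_q0.
  intros y Hy. assert (1 - y <> 0) by (apply Rabs_def2 in Hy; lra).
  apply Rabs_def2 in Hy.
  auto_derive. repeat apply Rmult_integral_contrapositive_currified; intro; lra.
  field. lra. exact Hx.
Qed.

Lemma PS_q2 x : Rabs x < 1 -> PSeries q2 x = (4 + 2 * x) / (1 - x) ^ 4.
Proof.
  intros Hx. unfold q2. apply (ps_step _ (fun y => (1 + y) / (1 - y) ^ 3) (fun y => (4 + 2 * y) / (1 - y) ^ 4)).
  apply CV_q2. apply PS_q1.
  intros y Hy. assert (1 - y <> 0) by (apply Rabs_def2 in Hy; lra).
  apply Rabs_def2 in Hy.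
  auto_derive. repeat apply Rmult_integral_contrapositive_currified; intro; lra.
  field. lra. exact Hx.
Qed.

Lemma is_series_PS (a : nat -> R) x : CV_radius a = 1 -> Rabs x < 1 ->
  is_series (fun n => a n * x ^ n) (PSeries a x).
Proof.
  intros Hr Hx. apply is_pseries_R. apply PSeries_correct. apply CV_radius_inside.
  rewrite Hr. simpl. exact Hx.
Qed.

Lemma q1_val n : q1 n = (INR n + 1) ^ 2.
Proof. unfold q1, q0, p1, PS_derive, PS_incr_1. rewrite S_INR. ring. Qed.
Lemma q2_val n : q2 n = (INR n + 1) * (INR n + 2) ^ 2.
Proof. unfold q2. unfold PS_derive at 1. rewrite q1_val, !S_INR. ring. Qed.

Lemma series_tail_R (u v : nat -> R) (N : nat) (l : R) :
  (forall k, u (S N + k)%nat = v (S N + k)%nat) -> is_series u l ->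
  is_series v (l - sum_n u N + sum_n v N).
Proof.
  intros Huv Hu. apply (is_series_decr_n v (S N)). lia.
  match goal with |- is_series _ ?L => replace L with (l - sum_n u N) end.
  2:{ simpl pred. match goal with |- ?A = ?B => change (@eq R A B) end.
       change (plus ?a ?b) with (a + b). change (opp ?a) with (- a).
       change (@sum_n (NormedModule.AbelianMonoid R_AbsRing R_NormedModule) v N) with (@sum_n R_AbelianMonoid v N). lra. }
  apply is_series_ext with (fun k => u (S N + k)%nat). exact Huv.
  apply is_series_incr_n. lia.
  match goal with |- is_series _ ?L => replace L with l end. exact Hu.
  simpl pred. match goal with |- ?A = ?B => change (@eq R A B) end.
  change (plus ?a ?b) with (a + b).
  change (@sum_n (NormedModule.AbelianMonoid R_AbsRing R_NormedModule) u N) with (@sum_n R_AbelianMonoid u N). lra.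
Qed.

Lemma Cpc (a b : C) : (a + b + - b = a)%C.
Proof. ring. Qed.
Lemma Cms (a b : C) : (a - b + b = a)%C.
Proof. ring. Qed.

Lemma series_tail_C (u v : nat -> C) (N : nat) (l : C) :
  (forall k, u (S N + k)%nat = v (S N + k)%nat) -> is_series u l ->
  is_series v (l - sum_n u N + sum_n v N)%C.
Proof.
  intros Huv Hu. apply (is_series_decr_n v (S N)). lia.
  match goal with |- is_series _ ?L => replace L with (l - sum_n u N)%C end.
  2:{ simpl pred. match goal with |- ?A = ?B => change (@eq C A B) end.
       change (plus ?a ?b) with (Cplus a b). change (opp ?a) with (Copp a).
       symmetry. apply Cpc. }
  apply is_series_ext with (fun k => u (S N + k)%nat). exact Huv.
  apply is_series_incr_n. lia.
  match goal with |- is_series _ ?L => replace L with l end. exact Hu.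
  simpl pred. match goal with |- ?A = ?B => change (@eq C A B) end.
  change (plus ?a ?b) with (Cplus a b). symmetry. apply Cms.
Qed.

Definition a0r (b : R) (n : nat) : R :=
  match n with 0 => 0 | 1 => 1 | 2 => -2 * b | _ => - INR n end.
Definition c1r (b : R) (n : nat) : R := INR (S n) * a0r b (S n).
Definition c2r (b : R) (n : nat) : R := INR (S n) * c1r b (S n).
Definition Dc (b x : R) : R := 2 + 4 * (1 - b) * x - (1 + x) / (1 - x) ^ 3.
Definition F2c (b x : R) : R := 4 * (1 - b) - (4 + 2 * x) / (1 - x) ^ 4.

Lemma c1_series b x : Rabs x < 1 -> is_series (fun n => c1r b n * x ^ n) (Dc b x).
Proof.
  intros Hx.
  pose proof (is_series_PS q1 x (proj1 (proj2 CV_q2)) Hx) as H.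
  rewrite PS_q1 in H by exact Hx.
  apply (@is_series_opp R_AbsRing R_NormedModule) in H.
  assert (Ht : forall k, (fun n => opp (q1 n * x ^ n)) (S 1 + k)%nat = (fun n => c1r b n * x ^ n) (S 1 + k)%nat).
  { intros k. simpl. change (opp ?a) with (- a). unfold c1r, a0r.
    rewrite q1_val. rewrite !S_INR. ring. }
  pose proof (series_tail_R _ (fun n => c1r b n * x ^ n) 1 _ Ht H) as H2.
  match type of H2 with is_series _ ?L => replace (Dc b x) with L end. exact H2.
  rewrite !sum_Sn, !sum_O. change (plus ?a ?b) with (a + b). change (opp ?a) with (- a).
  unfold Dc, c1r, a0r. rewrite !q1_val. simpl. field. apply Rabs_def2 in Hx. lra.
Qed.

Lemma c2_series b x : Rabs x < 1 -> is_series (fun n => c2r b n * x ^ n) (F2c b x).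
Proof.
  intros Hx.
  pose proof (is_series_PS q2 x (proj1 CV_q2) Hx) as H.
  rewrite PS_q2 in H by exact Hx.
  apply (@is_series_opp R_AbsRing R_NormedModule) in H.
  assert (Ht : forall k, (fun n => opp (q2 n * x ^ n)) (S 0 + k)%nat = (fun n => c2r b n * x ^ n) (S 0 + k)%nat).
  { intros k. simpl. change (opp ?a) with (- a). unfold c2r, c1r, a0r.
    rewrite q2_val. rewrite !S_INR. ring. }
  pose proof (series_tail_R _ (fun n => c2r b n * x ^ n) 0 _ Ht H) as H2.
  match type of H2 with is_series _ ?L => replace (F2c b x) with L end. exact H2.
  rewrite !sum_O. change (opp ?a) with (- a).
  unfold F2c, c2r, c1r, a0r. rewrite !q2_val. simpl. field. apply Rabs_def2 in Hx. lra.
Qed.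

Lemma sum_nz (z : C) N :
  ((1 - z) ^ 2 * sum_n (fun k => RtoC (INR k) * z ^ k) N
   = z - RtoC (INR (S N)) * z ^ (S N) + RtoC (INR N) * z ^ (S (S N)))%C.
Proof.
  induction N.
  - rewrite sum_O. simpl. ring.
  - rewrite sum_Sn. change (plus ?a ?b) with (Cplus a b).
    rewrite Cmult_plus_distr_l, IHN. rewrite !S_INR, !RtoC_plus. simpl. ring.
Qed.

Lemma div_cancel (x w : C) : w <> RtoC 0 -> x = ((w * x) / w)%C.
Proof. intros H. field. exact H. Qed.

Lemma series_nz (z : C) : Cmod z < 1 ->
  is_series (fun k => RtoC (INR k) * z ^ k)%C (z / (1 - z) ^ 2)%C.
Proof.
  intros Hz.
  assert (Hnz : (1 - z)%C <> RtoC 0).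
  { intro E. assert (z = RtoC 1) by (transitivity (1 - (1 - z))%C; [ring| rewrite E; ring]).
    subst z. rewrite Cmod_1 in Hz. lra. }
  pose proof (Cmod_gt_0 (1 - z)%C) as [Hc _]. specialize (Hc Hnz).
  set (c := Cmod (1 - z)) in *.
  set (s := Cmod z). assert (Hs : 0 <= s < 1) by (split; [apply Cmod_ge_0|exact Hz]).
  apply (lim_zero_bound _ _ (fun N => (2 / c ^ 2) * ((INR N + 1) ^ 1 * s ^ N))).
  - intros N. change (norm (minus ?a ?b)) with (Cmod (a - b)).
    assert (E : (sum_n (fun k => RtoC (INR k) * z ^ k) N - z / (1 - z) ^ 2
      = (- (RtoC (INR (S N)) * z ^ (S N)) + RtoC (INR N) * z ^ (S (S N))) / (1 - z) ^ 2)%C).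
    { pose proof (sum_nz z N) as Hs'.
      assert (Hp : ((1 - z) ^ 2)%C <> RtoC 0) by (apply Cpow_nz; exact Hnz).
      assert (Hsum : sum_n (fun k => RtoC (INR k) * z ^ k)%C N =
        ((z - RtoC (INR (S N)) * z ^ (S N) + RtoC (INR N) * z ^ (S (S N))) / (1 - z) ^ 2)%C).
      { rewrite <- Hs'. apply div_cancel. exact Hp. }
      rewrite Hsum. field. exact Hnz. }
    change (@sum_n (NormedModule.AbelianMonoid C_AbsRing C_NormedModule)) with (@sum_n C_AbelianMonoid).
    rewrite E. rewrite Cmod_div by (apply Cpow_nz; exact Hnz).
    rewrite Cmod_pow. fold c.
    pose proof (Cmod_triangle (- (RtoC (INR (S N)) * z ^ (S N))) (RtoC (INR N) * z ^ (S (S N)))) as T.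
    rewrite Cmod_opp, !Cmod_mult, !Cmod_R, !Cmod_pow, !Rabs_pos_eq in T by apply pos_INR.
    fold s in T. pose proof (S_INR N) as HSN.
    pose proof (pos_INR N). pose proof (pow_le s N (proj1 Hs)).
    assert (Hc2 : 0 < c ^ 2) by (apply pow_lt; lra).
    apply Rle_trans with ((((INR (S N)) * s ^ S N + INR N * s ^ S (S N))) * / c ^ 2).
    apply Rmult_le_compat_r. apply Rlt_le, Rinv_0_lt_compat; lra. exact T.
    assert (HA : INR (S N) * s ^ S N + INR N * s ^ S (S N) <= 2 * ((INR N + 1) ^ 1 * s ^ N)).
    { rewrite HSN, pow_1. change (s ^ S N) with (s * s ^ N). change (s ^ S (S N)) with (s * (s * s ^ N)).
      assert (s * s ^ N <= s ^ N) by nra. assert (s * (s * s ^ N) <= s ^ N) by nra. nra. }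
    assert (Hi : 0 < / c ^ 2) by (apply Rinv_0_lt_compat; lra).
    unfold Rdiv. nra.
  - pose proof (is_lim_seq_scal_l _ (2 / c ^ 2) _ (ex_series_lim_0 _ (pow_series 1 s Hs))) as Hl.
    simpl in Hl. rewrite Rmult_0_r in Hl. exact Hl.
Qed.

Definition a0C (b : R) (n : nat) : C := RtoC (a0r b n).

Lemma Cnz1 (z : C) : Cmod z < 1 -> (1 - z)%C <> RtoC 0.
Proof.
  intros Hz E. assert (z = RtoC 1) by (transitivity (1 - (1 - z))%C; [ring| rewrite E; ring]).
  subst z. rewrite Cmod_1 in Hz. lra.
Qed.

Lemma f0_series b z : Cmod z < 1 -> is_series (fun n => (a0C b n * z ^ n)%C) (f0 b z).
Proof.
  intros Hz. pose proof (series_nz z Hz) as H.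
  apply (@is_series_opp C_AbsRing C_NormedModule) in H.
  assert (Ht : forall k, (fun n => opp (RtoC (INR n) * z ^ n)%C) (S 2 + k)%nat
                       = (fun n => (a0C b n * z ^ n)%C) (S 2 + k)%nat).
  { intros k. cbv beta. replace (S 2 + k)%nat with (S (S (S k))) by lia.
    change (opp ?a) with (Copp a). unfold a0C.
    change (a0r b (S (S (S k)))) with (- INR (S (S (S k)))). rewrite RtoC_opp.
    match goal with |- ?A = ?B => change (@eq C A B) end. ring. }
  pose proof (series_tail_C _ (fun n => (a0C b n * z ^ n)%C) 2 _ Ht H) as H2.
  match type of H2 with is_series _ ?L => replace (f0 b z) with L end. exact H2.
  rewrite !sum_Sn, !sum_O. change (plus ?a ?b) with (Cplus a b). change (opp ?a) with (Copp a).
  change (plus ?a ?b) with (Cplus a b).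
  unfold f0, a0C, a0r. simpl INR.
  match goal with |- ?A = ?B => change (@eq C A B) end.
  rewrite ?RtoC_opp, ?RtoC_mult, ?RtoC_minus, ?RtoC_plus.
  field. apply Cnz1; exact Hz.
Qed.

Lemma sum_n_RtoC (u : nat -> R) N : sum_n (fun n => RtoC (u n)) N = RtoC (sum_n u N).
Proof.
  induction N.
  - rewrite !sum_O. reflexivity.
  - rewrite !sum_Sn. change (plus (sum_n (fun n => RtoC (u n)) N) (RtoC (u (S N)))) with
      (Cplus (sum_n (fun n => RtoC (u n)) N) (RtoC (u (S N)))).
    rewrite IHN. change (plus (sum_n u N) (u (S N))) with (sum_n u N + u (S N)).
    rewrite RtoC_plus. reflexivity.
Qed.

Lemma RtoC_series (u : nat -> R) (l : R) : is_series u l -> is_series (fun n => RtoC (u n)) (RtoC l).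
Proof.
  intros H. unfold is_series in *.
  apply (lim_dom (sum_n u) (sum_n (fun n => RtoC (u n))) l (RtoC l)); [|exact H].
  intros N. change (Cmod (@sum_n C_AbelianMonoid (fun n => RtoC (u n)) N - RtoC l) <= Rabs (@sum_n R_AbelianMonoid u N - l)).
  rewrite sum_n_RtoC, <- RtoC_minus, Cmod_R. apply Rle_refl.
Qed.

Definition D1 (a : nat -> C) (z : C) : C := CS (fun n => (dC a n * z ^ n)%C).
Definition D2 (a : nat -> C) (z : C) : C := CS (fun n => (dC (dC a) n * z ^ n)%C).

Lemma deriv_chain (a : nat -> C) (f : C -> C) :
  (forall n, Cmod (a n) <= 2 * (INR n + 1) ^ 1) ->
  (forall w, Cmod w < 1 -> is_series (fun n => (a n * w ^ n)%C) (f w)) ->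
  forall z, Cmod z < 1 ->
    is_derive f z (D1 a z) /\ is_derive (D1 a) z (D2 a z) /\
    is_series (fun n => (dC a n * z ^ n)%C) (D1 a z) /\
    is_series (fun n => (dC (dC a) n * z ^ n)%C) (D2 a z).
Proof.
  intros Ha HF.
  pose proof (termwise a f 2 1 Ha HF) as T1.
  assert (HF1 : forall w, Cmod w < 1 -> is_series (fun n => (dC a n * w ^ n)%C) (D1 a w)).
  { intros w Hw. apply CS_correct. apply (T1 w Hw). }
  pose proof (termwise (dC a) (D1 a) (2 * 2 ^ 1) 2 (dC_bound a 2 1 Ha) HF1) as T2.
  intros z Hz. destruct (T1 z Hz) as [_ A1]. destruct (T2 z Hz) as [E2 A2].
  split; [exact A1|]. split; [exact A2|]. split. apply HF1; exact Hz.
  apply CS_correct; exact E2.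
Qed.

Lemma Cmod_le_sub (y z : C) : Cmod y <= Cmod (y - z) + Cmod z.
Proof. assert (E : y = ((y - z) + z)%C) by ring. rewrite E at 1. apply Cmod_triangle. Qed.

Lemma locally_disk_C (z : C) (P : C -> Prop) : Cmod z < 1 ->
  (forall y, Cmod y < 1 -> P y) -> @locally (AbsRing_UniformSpace C_AbsRing) z P.
Proof.
  intros Hz HP. assert (H : 0 < 1 - Cmod z) by lra.
  exists (mkposreal _ H). intros y Hy.
  change (Cmod (y - z) < 1 - Cmod z) in Hy. apply HP.
  eapply Rle_lt_trans. apply (Cmod_le_sub y z). lra.
Qed.

Definition class_coef (b : R) (a : nat -> C) : Prop :=
  a 0%nat = RtoC 0 /\ a 1%nat = RtoC 1 /\ Cmod (a 2%nat) = 2 * b /\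
  (forall n : nat, (3 <= n)%nat -> Cmod (a n) <= INR n).

Lemma class_coef_bound b a : b <= 1 -> class_coef b a -> forall n, Cmod (a n) <= 2 * (INR n + 1) ^ 1.
Proof.
  intros Hb [H0 [H1 [H2 H3]]] n. rewrite pow_1.
  destruct n as [|[|[|k]]].
  - rewrite H0, Cmod_0. simpl. lra.
  - rewrite H1, Cmod_1. simpl. lra.
  - rewrite H2. simpl. lra.
  - pose proof (H3 (S (S (S k))) ltac:(lia)). pose proof (pos_INR (S (S (S k)))). lra.
Qed.

Lemma class_coef_beta b a : class_coef b a -> forall k, Cmod (a (S (S k))) <= - a0r b (S (S k)).
Proof.
  intros [H0 [H1 [H2 H3]]] k. destruct k as [|j].
  - rewrite H2. simpl. lra.
  - pose proof (H3 (S (S (S j))) ltac:(lia)). change (a0r b (S (S (S j)))) with (- INR (S (S (S j)))). lra.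
Qed.

Lemma a0C_coef b : 0 <= b -> class_coef b (a0C b).
Proof.
  intros Hb. unfold class_coef, a0C. split. reflexivity. split. reflexivity. split.
  - rewrite Cmod_R. simpl a0r. rewrite Rabs_left1; lra.
  - intros n Hn. destruct n as [|[|[|k]]]; try lia. rewrite Cmod_R.
    change (a0r b (S (S (S k)))) with (- INR (S (S (S k)))). rewrite Rabs_Ropp, Rabs_pos_eq by apply pos_INR.
    lra.
Qed.

Lemma ex_D12 b a z : b <= 1 -> class_coef b a -> Cmod z < 1 ->
  is_series (fun n => (dC a n * z ^ n)%C) (D1 a z) /\
  is_series (fun n => (dC (dC a) n * z ^ n)%C) (D2 a z).
Proof.
  intros Hb Hc Hz. pose proof (class_coef_bound b a Hb Hc) as Ha.
  pose proof (dC_bound a 2 1 Ha) as Ha1. pose proof (dC_bound (dC a) _ _ Ha1) as Ha2.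
  pose proof (Cmod_ge_0 z).
  split; apply CS_correct.
  - apply (ex_series_le (V := C_CompleteNormedModule)) with
      (b := fun n => scal (2 * 2 ^ 1) ((INR n + 1) ^ 2 * Cmod z ^ n)).
    + intros n. change (norm ?x) with (Cmod x). rewrite Cmod_mult, Cmod_pow.
      change (scal ?a ?b) with (a * b). rewrite <- Rmult_assoc.
      apply Rmult_le_compat_r. apply pow_le; lra. apply Ha1.
    + apply (@ex_series_scal_l R_AbsRing R_NormedModule). apply pow_series. lra.
  - apply (ex_series_le (V := C_CompleteNormedModule)) with
      (b := fun n => scal (2 * 2 ^ 1 * 2 ^ 2) ((INR n + 1) ^ 3 * Cmod z ^ n)).
    + intros n. change (norm ?x) with (Cmod x). rewrite Cmod_mult, Cmod_pow.
      change (scal ?a ?b) with (a * b). rewrite <- Rmult_assoc.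
      apply Rmult_le_compat_r. apply pow_le; lra. apply Ha2.
    + apply (@ex_series_scal_l R_AbsRing R_NormedModule). apply pow_series. lra.
Qed.

Lemma class_repr b f f1 f2 : 0 <= b <= 1 -> InFclass b f f1 f2 ->
  exists a, class_coef b a /\
    forall z, Cmod z < 1 -> f1 z = D1 a z /\ f2 z = D2 a z.
Proof.
  intros Hb [a [H0 [H1 [H2 [H3 H4]]]]].
  assert (Hc : class_coef b a) by (repeat split; auto).
  exists a. split; [exact Hc|].
  pose proof (class_coef_bound b a (proj2 Hb) Hc) as Ha.
  assert (HF : forall w, Cmod w < 1 -> is_series (fun n => (a n * w ^ n)%C) (f w)).
  { intros w Hw. apply (H4 w Hw). }
  pose proof (deriv_chain a f Ha HF) as DC.
  assert (E1 : forall z, Cmod z < 1 -> f1 z = D1 a z).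
  { intros z Hz. destruct (H4 z Hz) as [_ [Hd _]]. destruct (DC z Hz) as [Hd' _].
    unfold Cderiv in Hd.
    rewrite <- (is_C_derive_unique f z (f1 z) Hd). apply is_C_derive_unique. exact Hd'. }
  intros z Hz. split. apply E1; exact Hz.
  destruct (H4 z Hz) as [_ [_ Hd]]. destruct (DC z Hz) as [_ [Hd' _]].
  unfold Cderiv in Hd.
  assert (Hd2 : is_derive f1 z (D2 a z)).
  { apply (is_derive_ext_loc (D1 a) f1). apply locally_disk_C. exact Hz.
    intros y Hy. symmetry. apply E1; exact Hy. exact Hd'. }
  rewrite <- (is_C_derive_unique f1 z (f2 z) Hd). apply is_C_derive_unique. exact Hd2.
Qed.

Lemma f1_lower b a z r : 0 <= b <= 1 -> class_coef b a -> Cmod z <= r -> r < 1 ->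
  Dc b r <= Cmod (D1 a z).
Proof.
  intros Hb Hc Hz Hr.
  pose proof (Cmod_ge_0 z).
  destruct (ex_D12 b a z (proj2 Hb) Hc ltac:(lra)) as [HV _].
  set (L := D1 a z) in *.
  assert (Hv0 : (dC a 0 * z ^ 0)%C = RtoC 1).
  { unfold dC. destruct Hc as [_ [H1 _]]. rewrite H1. simpl. ring. }
  assert (Ht : is_series (fun k => (dC a (S k) * z ^ (S k))%C) (L - RtoC 1)%C).
  { apply (@is_series_incr_1 C_AbsRing C_NormedModule (fun n => (dC a n * z ^ n)%C)).
    match goal with |- is_series _ ?P => replace P with L end. exact HV.
    change (plus ?x ?y) with (Cplus x y). rewrite Hv0. ring. }
  pose proof (c1_series b r ltac:(rewrite Rabs_pos_eq; lra)) as HR.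
  assert (HRt : is_series (fun k => c1r b (S k) * r ^ (S k)) (Dc b r - 1)).
  { apply (@is_series_incr_1 R_AbsRing R_NormedModule (fun n => c1r b n * r ^ n)).
    match goal with |- is_series _ ?P => replace P with (Dc b r) end. exact HR.
    change (plus ?x ?y) with (x + y). unfold c1r, a0r. simpl. ring. }
  apply (@is_series_opp R_AbsRing R_NormedModule) in HRt.
  assert (Hterm : forall k, Cmod ((fun k => (dC a (S k) * z ^ (S k))%C) k) <= (fun n => opp (c1r b (S n) * r ^ S n)) k).
  { intros k. change (opp ?x) with (- x). cbv beta.
  pose proof (class_coef_beta b a Hc k) as Hbeta.
  unfold dC, c1r. rewrite !Cmod_mult, Cmod_R, Rabs_pos_eq by apply pos_INR.
  pose proof (Cmod_pow_le z r (S k) Hz) as Hp.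
  pose proof (pos_INR (S (S k))). pose proof (Cmod_ge_0 (a (S (S k)))).
  pose proof (Cmod_ge_0 (z ^ S k)).
  assert (INR (S (S k)) * Cmod (a (S (S k))) <= INR (S (S k)) * - a0r b (S (S k))).
  { apply Rmult_le_compat_l; lra. }
  apply Rle_trans with (INR (S (S k)) * - a0r b (S (S k)) * r ^ S k).
  apply Rmult_le_compat; try lra. apply Rmult_le_pos; lra. right; ring. }
  assert (Hle : Cmod (L - RtoC 1) <= opp (Dc b r - 1)).
  { apply (series_norm_le _ _ _ _ Hterm Ht HRt). }
  change (opp (Dc b r - 1)) with (- (Dc b r - 1)) in Hle.
  pose proof (Cmod_le_sub (RtoC 1) L) as T.
  rewrite Cmod_1 in T.
  replace (RtoC 1 - L)%C with (- (L - RtoC 1))%C in T by ring. rewrite Cmod_opp in T. lra.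
Qed.

Lemma f2_upper b a z r : 0 <= b <= 1 -> class_coef b a -> Cmod z <= r -> r < 1 ->
  Cmod (D2 a z) <= - F2c b r.
Proof.
  intros Hb Hc Hz Hr.
  pose proof (Cmod_ge_0 z).
  destruct (ex_D12 b a z (proj2 Hb) Hc ltac:(lra)) as [_ HV].
  pose proof (c2_series b r ltac:(rewrite Rabs_pos_eq; lra)) as HR.
  apply (@is_series_opp R_AbsRing R_NormedModule) in HR.
  assert (Hterm : forall n, Cmod ((fun n => (dC (dC a) n * z ^ n)%C) n) <= (fun n => opp (c2r b n * r ^ n)) n).
  { intros n. change (opp ?x) with (- x). cbv beta.
  pose proof (class_coef_beta b a Hc n) as Hbeta.
  unfold dC, c2r, c1r. rewrite !Cmod_mult, !Cmod_R, !Rabs_pos_eq by apply pos_INR.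
  pose proof (Cmod_pow_le z r n Hz) as Hp.
  pose proof (pos_INR (S (S n))). pose proof (pos_INR (S n)). pose proof (Cmod_ge_0 (a (S (S n)))).
  pose proof (Cmod_ge_0 (z ^ n)).
  assert (INR (S n) * (INR (S (S n)) * Cmod (a (S (S n)))) <= INR (S n) * (INR (S (S n)) * - a0r b (S (S n)))).
  { apply Rmult_le_compat_l. lra. apply Rmult_le_compat_l; lra. }
  apply Rle_trans with (INR (S n) * (INR (S (S n)) * - a0r b (S (S n))) * r ^ n).
  apply Rmult_le_compat; try lra. apply Rmult_le_pos. lra. apply Rmult_le_pos; lra. right; ring. }
  pose proof (series_norm_le _ _ _ _ Hterm HV HR) as HH.
  change (opp (F2c b r)) with (- F2c b r) in HH. exact HH.
Qed.

Lemma D1_real b t : 0 <= t < 1 -> D1 (a0C b) (RtoC t) = RtoC (Dc b t).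
Proof.
  intros Ht. unfold D1. apply CS_eq.
  apply is_series_ext with (fun n => RtoC (c1r b n * t ^ n)).
  intros n. unfold dC, a0C, c1r. rewrite !RtoC_mult, RtoC_pow. reflexivity.
  apply RtoC_series. apply c1_series. rewrite Rabs_pos_eq; lra.
Qed.

Lemma D2_real b t : 0 <= t < 1 -> D2 (a0C b) (RtoC t) = RtoC (F2c b t).
Proof.
  intros Ht. unfold D2. apply CS_eq.
  apply is_series_ext with (fun n => RtoC (c2r b n * t ^ n)).
  intros n. unfold dC, a0C, c2r, c1r. rewrite !RtoC_mult, RtoC_pow. reflexivity.
  apply RtoC_series. apply c2_series. rewrite Rabs_pos_eq; lra.
Qed.

Lemma f0_class b : 0 <= b <= 1 -> InFclass b (f0 b) (D1 (a0C b)) (D2 (a0C b)).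
Proof.
  intros Hb. destruct (a0C_coef b (proj1 Hb)) as [H0 [H1 [H2 H3]]].
  exists (a0C b). split; [exact H0|]. split; [exact H1|]. split; [exact H2|]. split; [exact H3|].
  intros z Hz.
  pose proof (deriv_chain (a0C b) (f0 b) (class_coef_bound b _ (proj2 Hb) (a0C_coef b (proj1 Hb)))
    (fun w Hw => f0_series b w Hw) z Hz) as [A1 [A2 _]].
  split; [apply f0_series; exact Hz|]. split; [exact A1|exact A2].
Qed.

Lemma key_id b alpha r : r < 1 ->
  (1 - r) ^ 4 * ((1 - alpha) * Dc b r + r * F2c b r) =
  2 * (1 - alpha + 2 * (2 - alpha) * (1 - b) * r) * (1 - r) ^ 4
  - (1 - alpha + 4 * r + (1 + alpha) * r ^ 2).
Proof. intros Hr. unfold Dc, F2c. field. lra. Qed.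

Lemma F2c_neg b r : 0 <= b <= 1 -> 0 < r < 1 -> F2c b r < 0.
Proof.
  intros Hb Hr. unfold F2c.
  assert (H1 : 0 < (1 - r) ^ 4) by (apply pow_lt; lra).
  assert (H2 : (1 - r) ^ 4 <= 1).
  { replace 1 with (1 ^ 4) at 2 by ring. apply pow_incr. lra. }
  assert (H3 : 4 + 2 * r <= (4 + 2 * r) / (1 - r) ^ 4).
  { apply Rmult_le_reg_r with ((1 - r) ^ 4). exact H1. field_simplify; [|lra]. nra. }
  lra.
Qed.

Lemma E_neg b alpha r0 t : 0 <= b <= 1 -> 0 <= alpha < 1 -> 0 < r0 -> r0 < t < 1 ->
  r0_eq b alpha r0 ->
  2 * (1 - alpha + 2 * (2 - alpha) * (1 - b) * t) * (1 - t) ^ 4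
  - (1 - alpha + 4 * t + (1 + alpha) * t ^ 2) < 0.
Proof.
  intros Hb Ha Hr0 Ht E. unfold r0_eq in E.
  set (c := 2 * (2 - alpha) * (1 - b)) in *.
  assert (Hc : 0 <= c <= 2 * (2 - alpha)).
  { unfold c. split. apply Rmult_le_pos; lra. assert (0 <= 2 * (2 - alpha) * b) by (apply Rmult_le_pos; lra). lra. }
  set (u := 1 - t) in *. set (v := 1 - r0) in *.
  assert (Hu : 0 < u < 1) by (unfold u; lra).
  set (e := t - r0).
  assert (He : 0 < e) by (unfold e; lra).
  assert (Hvu : v = u + e) by (unfold u, v, e; ring).
  assert (Hu3 : 0 <= u ^ 3) by (apply pow_le; lra).
  assert (H4 : v ^ 4 - u ^ 4 >= 4 * e * u ^ 3).
  { rewrite Hvu. replace ((u + e) ^ 4 - u ^ 4) with (4 * e * u ^ 3 + (6 * (u * e) ^ 2 + 4 * u * e ^ 3 + e ^ 4)) by ring.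
    assert (0 <= (u * e) ^ 2) by apply pow2_ge_0.
    assert (0 <= u * e ^ 3) by (apply Rmult_le_pos; [lra| apply pow_le; lra]).
    assert (0 <= e ^ 4) by (apply pow_le; lra). lra. }
  set (A0 := 1 - alpha + c * r0).
  assert (HA0 : 1 - alpha <= A0) by (unfold A0; assert (0 <= c * r0) by (apply Rmult_le_pos; lra); lra).
  assert (HA1 : (1 - alpha) * (4 * e * u ^ 3) <= A0 * (v ^ 4 - u ^ 4)).
  { apply Rmult_le_compat; try lra. assert (0 <= e * u ^ 3) by (apply Rmult_le_pos; lra). lra. }
  assert (HA : (1 - alpha + c * t) * u ^ 4 - A0 * v ^ 4 = c * e * u ^ 4 - A0 * (v ^ 4 - u ^ 4))
    by (unfold A0, e; ring).
  assert (HX : c * u - 4 * (1 - alpha) <= 2 * alpha).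
  { assert (c * u <= c) by (assert (0 <= c * (1 - u)) by (apply Rmult_le_pos; lra); lra). lra. }
  assert (Hu31 : u ^ 3 <= 1) by (replace 1 with (1 ^ 3) by ring; apply pow_incr; lra).
  assert (HB : e * u ^ 3 * (c * u - 4 * (1 - alpha)) <= e * (2 * alpha)).
  { destruct (Rle_dec 0 (c * u - 4 * (1 - alpha))).
    - apply Rle_trans with (e * 1 * (c * u - 4 * (1 - alpha))).
      apply Rmult_le_compat_r; [lra|]. apply Rmult_le_compat_l; lra.
      rewrite Rmult_1_r. apply Rmult_le_compat_l; lra.
    - assert (0 <= e * u ^ 3) by (apply Rmult_le_pos; lra).
      assert (e * u ^ 3 * (c * u - 4 * (1 - alpha)) <= 0).
      { apply Rmult_le_0_l; lra. }
      assert (0 <= e * (2 * alpha)) by (apply Rmult_le_pos; lra). lra. }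
  assert (HBB : c * e * u ^ 4 - 4 * (1 - alpha) * e * u ^ 3 = e * u ^ 3 * (c * u - 4 * (1 - alpha))) by ring.
  assert (HR : (1 - alpha + 4 * t + (1 + alpha) * t ^ 2) - (1 - alpha + 4 * r0 + (1 + alpha) * r0 ^ 2) >= 4 * e).
  { replace t with (r0 + e) by (unfold e; ring).
    replace ((1 - alpha + 4 * (r0 + e) + (1 + alpha) * (r0 + e) ^ 2) - (1 - alpha + 4 * r0 + (1 + alpha) * r0 ^ 2))
      with (4 * e + (1 + alpha) * (2 * r0 * e + e ^ 2)) by ring.
    assert (0 <= (1 + alpha) * (2 * r0 * e + e ^ 2)).
    { apply Rmult_le_pos. lra. assert (0 <= r0 * e) by (apply Rmult_le_pos; lra).
      assert (0 <= e ^ 2) by apply pow2_ge_0. lra. }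
    lra. }
  assert (E' : 2 * A0 * v ^ 4 = 1 - alpha + 4 * r0 + (1 + alpha) * r0 ^ 2) by (unfold A0; rewrite <- E; ring).
  assert (HAe : 2 * alpha * e < 2 * e) by (apply Rmult_lt_compat_r; lra).
  assert (Hfin : (1 - alpha + c * t) * u ^ 4 - A0 * v ^ 4 <= e * (2 * alpha)) by lra.
  lra.
Qed.

Lemma near_pos b r0 r : 0 <= b <= 1 -> 0 < r0 < 1 -> r0 < r <= 1 -> 0 < Dc b r0 ->
  exists t, r0 < t < r /\ t < 1 /\ 0 < Dc b t.
Proof.
  intros Hb Hr0 Hr HD.
  set (P := fun x => (2 + 4 * (1 - b) * x) * (1 - x) ^ 3 - (1 + x)).
  assert (HDP : forall x, x < 1 -> Dc b x = P x / (1 - x) ^ 3).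
  { intros x Hx. unfold Dc, P. field. lra. }
  assert (Hv3 : 0 < (1 - r0) ^ 3) by (apply pow_lt; lra).
  assert (HP0 : 0 < P r0).
  { rewrite HDP in HD by lra. unfold Rdiv in HD.
    assert (0 < / (1 - r0) ^ 3) by (apply Rinv_0_lt_compat; lra). nra. }
  set (eps := Rmin ((r - r0) / 2) (P r0 / 40)).
  assert (He : 0 < eps) by (apply Rmin_pos; lra).
  assert (He1 : eps <= (r - r0) / 2) by apply Rmin_l.
  assert (He2 : eps <= P r0 / 40) by apply Rmin_r.
  exists (r0 + eps). split; [lra|]. split; [lra|].
  set (t := r0 + eps).
  assert (Ht : t < 1) by (unfold t; lra).
  rewrite HDP by exact Ht.
  set (u := 1 - t). set (v := 1 - r0).
  assert (Hu : 0 < u) by (unfold u; lra).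
  assert (Hv : v = u + eps) by (unfold u, v, t; ring).
  assert (Hv1 : v <= 1) by (unfold v; lra).
  assert (H3 : v ^ 3 - u ^ 3 <= 3 * eps).
  { rewrite Hv. replace ((u + eps) ^ 3 - u ^ 3) with (eps * ((u + eps) ^ 2 + (u + eps) * u + u ^ 2)) by ring.
    rewrite <- Hv. assert (u <= 1) by lra.
    assert (v ^ 2 + v * u + u ^ 2 <= 3).
    { assert (v ^ 2 <= 1) by (replace 1 with (1 ^ 2) by ring; apply pow_incr; lra).
      assert (u ^ 2 <= 1) by (replace 1 with (1 ^ 2) by ring; apply pow_incr; lra).
      assert (v * u <= 1) by (replace 1 with (1 * 1) by ring; apply Rmult_le_compat; lra). lra. }
    apply Rle_trans with (eps * 3). apply Rmult_le_compat_l; lra. lra. }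
  set (B := 2 + 4 * (1 - b) * r0).
  assert (HB : 2 <= B <= 6).
  { unfold B. assert (0 <= 4 * (1 - b) * r0) by (apply Rmult_le_pos; [apply Rmult_le_pos|]; lra).
    assert (4 * (1 - b) * r0 <= 4) by (assert (0 <= 4 * (1 - b) * (1 - r0) + 4 * b) by
      (assert (0 <= 4 * (1 - b) * (1 - r0)) by (apply Rmult_le_pos; [apply Rmult_le_pos|]; lra); lra); nra). lra. }
  assert (HBt : B <= 2 + 4 * (1 - b) * t).
  { unfold B, t. assert (0 <= 4 * (1 - b) * eps) by (apply Rmult_le_pos; [apply Rmult_le_pos|]; lra). lra. }
  assert (Hu3 : 0 < u ^ 3) by (apply pow_lt; lra).
  assert (HPt : 0 < P t).
  { unfold P. fold u.
    assert (B * u ^ 3 <= (2 + 4 * (1 - b) * t) * u ^ 3) by (apply Rmult_le_compat_r; lra).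
    assert (HP0' : P r0 = B * v ^ 3 - (1 + r0)) by (unfold P, B, v; ring).
    assert (B * (v ^ 3 - u ^ 3) <= 6 * (3 * eps)).
    { apply Rmult_le_compat; try lra. assert (u ^ 3 <= v ^ 3) by (apply pow_incr; lra). lra. }
    assert (B * (v ^ 3 - u ^ 3) = B * v ^ 3 - B * u ^ 3) by ring.
    assert (t = r0 + eps) by reflexivity. lra. }
  unfold Rdiv. apply Rmult_lt_0_compat. exact HPt. apply Rinv_0_lt_compat. exact Hu3.
Qed.

Lemma r0_facts b alpha r0 : 0 <= b <= 1 -> 0 <= alpha < 1 -> 0 < r0 < 1 -> r0_eq b alpha r0 ->
  0 < Dc b r0 /\ F2c b r0 < 0 /\ (1 - alpha) * Dc b r0 = r0 * - F2c b r0.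
Proof.
  intros Hb Ha Hr E.
  pose proof (key_id b alpha r0 ltac:(lra)) as K. unfold r0_eq in E. rewrite E in K.
  assert (H4 : 0 < (1 - r0) ^ 4) by (apply pow_lt; lra).
  assert (K' : (1 - alpha) * Dc b r0 + r0 * F2c b r0 = 0).
  { assert (Z : (1 - r0) ^ 4 * ((1 - alpha) * Dc b r0 + r0 * F2c b r0) = 0) by (rewrite K; ring).
    apply Rmult_integral in Z. destruct Z; lra. }
  pose proof (F2c_neg b r0 Hb Hr) as HF.
  assert (0 < r0 * - F2c b r0) by (apply Rmult_lt_0_compat; lra).
  assert (0 < (1 - alpha) * Dc b r0) by lra.
  split. apply (Rmult_lt_reg_l (1 - alpha)). lra. lra.
  split. exact HF. lra.
Qed.

Lemma class_bound b alpha r0 f f1 f2 z : 0 <= b <= 1 -> 0 <= alpha < 1 -> 0 < r0 < 1 ->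
  r0_eq b alpha r0 -> InFclass b f f1 f2 -> Cmod z <= r0 ->
  f1 z <> RtoC 0 /\ Cmod (z * f2 z / f1 z)%C * r0 <= Cmod z * (1 - alpha).
Proof.
  intros Hb Ha Hr E Hf Hz.
  destruct (r0_facts b alpha r0 Hb Ha Hr E) as [HD [HF HK]].
  destruct (class_repr b f f1 f2 Hb Hf) as [a [Hc Hrep]].
  destruct (Hrep z ltac:(lra)) as [E1 E2]. rewrite E1, E2.
  pose proof (f1_lower b a z r0 Hb Hc Hz (proj2 Hr)) as L1.
  pose proof (f2_upper b a z r0 Hb Hc Hz (proj2 Hr)) as L2.
  assert (Hnz : D1 a z <> RtoC 0).
  { intro Z. rewrite Z, Cmod_0 in L1. lra. }
  split; [exact Hnz|].
  rewrite Cmod_div by exact Hnz. rewrite Cmod_mult.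
  pose proof (Cmod_ge_0 z). pose proof (Cmod_ge_0 (D2 a z)).
  set (m1 := Cmod (D1 a z)) in *. set (m2 := Cmod (D2 a z)) in *.
  assert (Hm1 : 0 < m1) by lra.
  unfold Rdiv. 
  assert (Hq : Cmod z * m2 * / m1 <= Cmod z * (- F2c b r0) * / Dc b r0).
  { apply Rmult_le_compat. apply Rmult_le_pos; lra. apply Rlt_le, Rinv_0_lt_compat; lra.
    apply Rmult_le_compat_l; lra. apply Rinv_le_contravar; lra. }
  apply Rle_trans with (Cmod z * - F2c b r0 * / Dc b r0 * r0).
  apply Rmult_le_compat_r; lra.
  replace (Cmod z * - F2c b r0 * / Dc b r0 * r0) with (Cmod z * ((r0 * - F2c b r0) / Dc b r0)) by (field; lra).
  rewrite <- HK. right. field. lra.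
Qed.
Lemma Re_1plus (w : C) : Re (1 + w)%C = 1 + Re w.
Proof. simpl. reflexivity. Qed.
Lemma Re_1plusR (x : R) : Re (1 + RtoC x)%C = 1 + x.
Proof. rewrite Re_1plus, re_RtoC. reflexivity. Qed.
Lemma Re_ge (w : C) : 1 - Cmod w <= Re (1 + w)%C.
Proof. rewrite Re_1plus. pose proof (re_le_Cmod w). pose proof (Rle_abs (- Re w)). rewrite Rabs_Ropp in H0. lra. Qed.
Lemma ratio_real t F D : D <> 0 -> (RtoC t * RtoC F / RtoC D)%C = RtoC (t * F / D).
Proof. intros H. rewrite (RtoC_div (t * F) D H), RtoC_mult. reflexivity. Qed.

Lemma upper_contra b alpha r0 r : 0 <= b <= 1 -> 0 <= alpha < 1 -> 0 < r0 < 1 -> r0_eq b alpha r0 ->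
  r0 < r <= 1 ->
  exists t, 0 < t < 1 /\ t < r /\ 0 < Dc b t /\
    Re (1 + RtoC t * D2 (a0C b) (RtoC t) / D1 (a0C b) (RtoC t))%C <= alpha /\
    Cmod (RtoC t * D2 (a0C b) (RtoC t) / D1 (a0C b) (RtoC t))%C = - (t * F2c b t / Dc b t) /\
    Re (1 + RtoC t * D2 (a0C b) (RtoC t) / D1 (a0C b) (RtoC t))%C = 1 + t * F2c b t / Dc b t.
Proof.
  intros Hb Ha Hr0 E Hr.
  destruct (r0_facts b alpha r0 Hb Ha Hr0 E) as [HD [HF HK]].
  destruct (near_pos b r0 r Hb Hr0 Hr HD) as [t [[Ht1 Ht2] [Ht3 HDt]]].
  exists t. split; [lra|]. split; [lra|]. split; [exact HDt|].
  rewrite D1_real, D2_real by lra. rewrite ratio_real by lra. rewrite Re_1plusR.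
  pose proof (E_neg b alpha r0 t Hb Ha (proj1 Hr0) (conj Ht1 Ht3) E) as En.
  rewrite <- key_id in En by lra.
  assert (H4 : 0 < (1 - t) ^ 4) by (apply pow_lt; lra).
  assert (HX : (1 - alpha) * Dc b t + t * F2c b t < 0).
  { destruct (Rlt_le_dec ((1 - alpha) * Dc b t + t * F2c b t) 0) as [h|h]; [exact h|].
    assert (0 <= (1 - t) ^ 4 * ((1 - alpha) * Dc b t + t * F2c b t)) by (apply Rmult_le_pos; lra). lra. }
  assert (HQ : t * F2c b t / Dc b t < alpha - 1).
  { apply (Rmult_lt_reg_r (Dc b t)). exact HDt. unfold Rdiv. rewrite Rmult_assoc, Rinv_l by lra. lra. }
  split; [lra|]. split; [|reflexivity].
  rewrite Cmod_R, Rabs_left by lra. reflexivity.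
Qed.

Lemma conv_lub b alpha r0 : 0 <= b <= 1 -> 0 <= alpha < 1 -> 0 < r0 < 1 -> r0_eq b alpha r0 ->
  is_lub (convex_order_radii alpha (InFclass b)) r0.
Proof.
  intros Hb Ha Hr0 E. split.
  - intros r [[Hrp Hr1] Hall]. destruct (Rle_dec r r0) as [h|h]; [exact h|]. exfalso.
    apply Rnot_le_lt in h.
    destruct (upper_contra b alpha r0 r Hb Ha Hr0 E (conj h Hr1)) as [t [Ht [Htr [_ [Hre _]]]]].
    destruct (Hall _ _ _ (f0_class b Hb) (RtoC t)) as [_ HRe].
    rewrite Cmod_R, Rabs_pos_eq; lra. lra.
  - intros ub Hub. apply Hub. split. lra.
    intros f f1 f2 Hf z Hz.
    destruct (class_bound b alpha r0 f f1 f2 z Hb Ha Hr0 E Hf (Rlt_le _ _ Hz)) as [Hnz Hw].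
    split; [exact Hnz|].
    assert (Hlt : Cmod (z * f2 z / f1 z)%C < 1 - alpha).
    { apply (Rmult_lt_reg_r r0). lra. apply Rle_lt_trans with (Cmod z * (1 - alpha)). exact Hw.
      rewrite Rmult_comm. apply Rmult_lt_compat_l; lra. }
    pose proof (Re_ge (z * f2 z / f1 z)%C). lra.
Qed.

Lemma unif_lub b r1 : 0 <= b <= 1 -> 0 < r1 < 1 -> r0_eq b (1 / 2) r1 ->
  is_lub (unif_convex_radii (InFclass b)) r1.
Proof.
  intros Hb Hr1 E. assert (Ha : 0 <= 1 / 2 < 1) by lra. split.
  - intros r [[Hrp Hr1'] Hall]. destruct (Rle_dec r r1) as [h|h]; [exact h|]. exfalso.
    apply Rnot_le_lt in h.
    destruct (upper_contra b (1 / 2) r1 r Hb Ha Hr1 E (conj h Hr1')) as [t [Ht [Htr [_ [Hre [Hm Hre2]]]]]].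
    destruct (Hall _ _ _ (f0_class b Hb) (RtoC t)) as [_ HRe].
    rewrite Cmod_R, Rabs_pos_eq; lra.
    rewrite Hm, Hre2 in HRe. rewrite Hre2 in Hre. lra.
  - intros ub Hub. apply Hub. split. lra.
    intros f f1 f2 Hf z Hz.
    destruct (class_bound b (1 / 2) r1 f f1 f2 z Hb Ha Hr1 E Hf (Rlt_le _ _ Hz)) as [Hnz Hw].
    split; [exact Hnz|].
    assert (Hlt : Cmod (z * f2 z / f1 z)%C < 1 - 1 / 2).
    { apply (Rmult_lt_reg_r r1). lra. apply Rle_lt_trans with (Cmod z * (1 - 1 / 2)). exact Hw.
      rewrite Rmult_comm. apply Rmult_lt_compat_l; lra. }
    pose proof (Re_ge (z * f2 z / f1 z)%C). lra.
Qed.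

Theorem theorem3p1 (b alpha r0 r1 : R) :
  0 <= b <= 1 -> 0 <= alpha < 1 ->
  0 < r0 < 1 -> r0_eq b alpha r0 ->
  0 < r1 < 1 -> r0_eq b (1 / 2) r1 ->
  (* (i) *)
  (forall f f1 f2, InFclass b f f1 f2 -> forall z : C, Cmod z <= r0 ->
     Cmod (z * f2 z / f1 z)%C <= 1 - alpha) /\
  (* (ii) *)
  is_radius_convexity_order alpha (InFclass b) r0 /\
  (* (iii) *)
  is_radius_unif_convexity (InFclass b) r1 /\
  (* sharpness *)
  (exists f1 f2 : C -> C,
     InFclass b (f0 b) f1 f2 /\
     Cmod (RtoC r0 * f2 (RtoC r0) / f1 (RtoC r0))%C = 1 - alpha /\
     Re (RtoC r0 * f2 (RtoC r0) / f1 (RtoC r0))%C = alpha - 1).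
Proof.
  intros Hb Ha Hr0 E0 Hr1 E1.
  split.
  { intros f f1 f2 Hf z Hz.
    destruct (class_bound b alpha r0 f f1 f2 z Hb Ha Hr0 E0 Hf Hz) as [_ Hw].
    apply (Rmult_le_reg_r r0). lra. apply Rle_trans with (Cmod z * (1 - alpha)). exact Hw.
    rewrite Rmult_comm. apply Rmult_le_compat_l; lra. }
  split. { apply conv_lub; assumption. }
  split. { apply unif_lub; assumption. }
  exists (D1 (a0C b)), (D2 (a0C b)). split. apply f0_class; exact Hb.
  destruct (r0_facts b alpha r0 Hb Ha Hr0 E0) as [HD [HF HK]].
  rewrite D1_real, D2_real by lra. rewrite ratio_real by lra.
  assert (HQ : r0 * F2c b r0 / Dc b r0 = alpha - 1).
  { field_simplify; [|lra]. apply (Rmult_eq_reg_r (Dc b r0)); [|lra].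
    unfold Rdiv. rewrite Rmult_assoc, Rinv_l by lra. lra. }
  rewrite HQ. split. rewrite Cmod_R, Rabs_left by lra. ring. apply re_RtoC.
Qed.
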